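(* Let $A\in\mathcal{C}^{\mathrm{clq}}$ be such that $\mathbf{A}:=\mathcal{G}(A)$ is $(n-1)$-pure. Let $\widehat{B}\in\mathcal{C}^{\mathrm{geo}}$ be such that $\mathbf{A}^{\mathrm{geo}}\le\widehat{B}$. Then there exists $B\in\mathcal{C}^{\mathrm{clq}}$ such that $A\le B$, $\mathcal{G}(B)$ is $(n-1)$-pure, and $(\mathcal{G}(B))^{\mathrm{geo}}=\widehat{B}$.
   Context: Fix a natural number $n$ and a symmetric irreflexive $n$-ary relation symbol $S$; substructures are induced. For an $\{S\}$-structure $A$, $K\subseteq A$ with $|K|\ge n$ is a clique if all $n$-element subsets of $K$ (as tuples of distinct elements) lie in $S^A$; maximal cliques are those not properly contained in another clique; $\mathcal{M}(A)$ is the set of maximal cliques. For finite $X$, $|X|_*=\max\{0,|X|-(n-1)\}$; for finite $A$, $\delta_s(A)=|A|-\sum_{K\in\mathcal{M}(A)}|K|_*$; for finite $B\subseteq A$, $\delta_s(A/B)=\delta_s(A)-\delta_s(B)$; $B\le A$ means $B$ is a substructure of $A$ and $\delta_s(X/B)\ge0$ for all finite $X$ with $B\subseteq X\subseteq A$. $\mathcal{C}^{\mathrm{clq}}_0$ is the class of finite $\{S\}$-structures in which distinct maximal cliques intersect in fewer than $n$ points; $\mathcal{C}^{\mathrm{clq}}$ is the class of $A\in\mathcal{C}^{\mathrm{clq}}_0$ with $\{a\}\le A$ for all $a\in A$. For an $\{S\}$-structure $A$ with $\{a\}\le A$ for all $a\in A$, the associated geometry $\mathcal{G}(A)$ is the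 geometry (finitary matroid with $\mathrm{cl}(\emptyset)=\emptyset$ and singletons closed) on the universe of $A$ with dimension function $d(X)=\inf\{\delta_s(Y):X\subseteq Y\subseteq A,\ Y\text{ finite}\}$ for finite $X$. A geometry is $m$-pure if $m$ is the maximal natural number such that every $m$-element subset is independent. For a geometry $\mathbf{A}$ on $A$, $\mathbf{A}^{\mathrm{geo}}$ is the $\{S\}$-structure on $A$ whose maximal cliques are exactly the sets $\mathrm{cl}_{\mathbf{A}}(C)$ with $C\in[A]^{n-1}$ and $\mathrm{cl}_{\mathbf{A}}(C)\ne C$. An $\{S\}$-structure $A$ is geometric if whenever $X\subseteq A$, $|X|\ge n$ and $\delta_s(X)<n$, there is a unique $K\in\mathcal{M}(A)$ with $X\subseteq K$; $\mathcal{C}^{\mathrm{geo}}$ is the class of finite geometric $\{S\}$-structures. *)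

(* Defs.v *)
From mathcomp Require Import all_boot all_order all_algebra.
Set Implicit Arguments. Unset Strict Implicit. Unset Printing Implicit Defensive.
Import Order.TTheory GRing.Theory Num.Theory.
Local Open Scope ring_scope.

(* An {S}-structure (S symmetric irreflexive n-ary) inside an ambient finite
   type T: a universe [carrier] and the relation S, represented as the set of
   n-element subsets {a1,..,an} such that (a1,..,an) is in S. *)
Record structure (T : finType) := Struc {
  carrier : {set T};
  rel : {set {set T}} }.

Section Defs.
Variables (n : nat) (T : finType).
Implicit Types (A B : structure T) (X Y K : {set T}).

Definition wf A : bool :=
  [forall e in rel A, (#|e| == n)%N && (e \subset carrier A)].

Definition induced A X : structure T :=
  Struc X [set e in rel A | e \subset X].

Definition substructure B A : bool :=
  (carrier B \subset carrier A) &&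
  (rel B == [set e in rel A | e \subset carrier B]).

Definition clique A K : bool :=
  [&& K \subset carrier A, (n <= #|K|)%N &
   [forall e : {set T}, ((e \subset K) && (#|e| == n)%N) ==> (e \in rel A)]].

Definition maxclique A K : bool :=
  clique A K && [forall K' : {set T}, clique A K' ==> ~~ (K \proper K')].

Definition mcliques A : {set {set T}} := [set K | maxclique A K].

Definition starcard X : int := Order.max 0 (#|X|%:Z - (n%:Z - 1)).

Definition delta A : int :=
  #|carrier A|%:Z - \sum_(K in mcliques A) starcard K.

Definition strong B A : bool :=
  substructure B A &&
  [forall X : {set T}, ((carrier B \subset X) && (X \subset carrier A)) ==>
     (0 <= delta (induced A X) - delta B)].

Definition Cclq0 A : bool :=
  wf A && [forall K1 in mcliques A, forall K2 in mcliques A,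
             (K1 != K2) ==> (#|K1 :&: K2| < n)%N].

Definition Cclq A : bool :=
  Cclq0 A && [forall a in carrier A, strong (induced A [set a]) A].

Definition dim A X : int :=
  \big[Order.min/delta (induced A X)]_(Y in powerset (carrier A) | X \subset Y)
     delta (induced A Y).

Definition cl A X : {set T} :=
  [set a in carrier A | dim A (X :|: [set a]) == dim A X].

Definition indep A X : bool := dim A X == #|X|%:Z.

Definition pure A (m : int) : Prop :=
  0 <= m /\
  (forall X, X \subset carrier A -> #|X|%:Z = m -> indep A X) /\
  (exists X, [/\ X \subset carrier A, #|X|%:Z = m + 1 & ~~ indep A X]).

(* Ag is the structure A^geo associated to the geometry G(A) *)
Definition geo_of A Ag : Prop :=
  [/\ carrier Ag = carrier A, wf Ag &
      mcliques Ag = [set cl A C | C in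
        [set C in powerset (carrier A) |
           (#|C|%:Z == n%:Z - 1) && (cl A C != C)]]].

Definition geometric A : bool :=
  [forall X : {set T}, [&& X \subset carrier A, (n <= #|X|)%N &
       delta (induced A X) < n%:Z] ==>
     (#|[set K in mcliques A | X \subset K]| == 1)%N].

Definition Cgeo A : bool := wf A && geometric A.

End Defs.

(* Main.v *)
Require Import Defs.
From mathcomp Require Import all_boot all_order all_algebra.
From mathcomp Require Import zify.
Import Order.TTheory GRing.Theory Num.Theory.
Local Open Scope ring_scope.
Set Implicit Arguments. Unset Strict Implicit. Unset Printing Implicit Defensive.
Local Notation rel := Defs.rel.
Local Notation dim := Defs.dim.

Section Gen.
Variables (n : nat) (T : finType).
Hypothesis n_gt0 : (0 < n)%N.
Implicit Types (S : structure T) (X Y K M Q e C W Z : {set T}).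

Definition sc X : nat := (#|X| - n.-1)%N.

Lemma starcardE X : starcard n X = (sc X)%:Z.
Proof. rewrite /starcard /sc; lia. Qed.

Lemma sumZ (I : finType) (P : pred I) (F : I -> nat) :
  (\sum_(i | P i) (F i)%:Z) = (\sum_(i | P i) F i)%N%:Z.
Proof. by rewrite (big_morph Posz PoszD (erefl 0%:Z)). Qed.

Lemma deltaE S : delta n S = #|carrier S|%:Z - (\sum_(K in mcliques n S) sc K)%N%:Z.
Proof. by rewrite /delta -sumZ; congr (_ - _); apply: eq_bigr => K _; rewrite starcardE. Qed.

Lemma sc_mono X Y : X \subset Y -> (sc X <= sc Y)%N.
Proof. by move=> /subset_leq_card h; rewrite /sc leq_sub2r. Qed.

Lemma sc_small X : (#|X| < n)%N -> sc X = 0%N.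
Proof. rewrite /sc; lia. Qed.

Lemma sum_sub (I : finType) (A B : {set I}) (F : I -> nat) :
  A \subset B -> (\sum_(i in A) F i <= \sum_(i in B) F i)%N.
Proof. by move=> AB; rewrite [X in (_ <= X)%N](big_setID A) /= (setIidPr AB) leq_addr. Qed.

Lemma sum_ge1 (I : finType) (A : {set I}) (F : I -> nat) j :
  j \in A -> (F j <= \sum_(i in A) F i)%N.
Proof. by move=> jA; rewrite (bigD1 j) //= leq_addr. Qed.

Lemma exists_sub k (D Z : {set T}) : D \subset Z -> (#|D| <= k <= #|Z|)%N ->
  exists E : {set T}, [/\ D \subset E, E \subset Z & #|E| = k].
Proof.
move=> DZ /andP[Dk kZ].
have [m km] : exists m, k = (#|D| + m)%N by exists (k - #|D|)%N; lia.
subst k; clear Dk.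
elim: m D DZ kZ => [|m IH] D DZ hc; first by exists D; rewrite addn0.
have : (0 < #|Z :\: D|)%N by rewrite cardsD (setIidPr DZ); move: hc; clear; lia.
rewrite card_gt0 => /set0Pn[x]; rewrite inE => /andP[xD xZ].
have DZ' : x |: D \subset Z by rewrite subUset sub1set xZ.
have cx : #|x |: D| = (#|D|).+1 by rewrite cardsU1 xD.
have [E [h1 h2 h3]] := IH _ DZ' ltac:(rewrite cx; lia).
by exists E; split => //; [apply: subset_trans h1; apply: subsetUr | rewrite h3 cx; lia].
Qed.

Lemma cliqueP S K : reflect [/\ K \subset carrier S, (n <= #|K|)%N &
   forall e, e \subset K -> #|e| = n -> e \in rel S] (clique n S K).
Proof.
apply: (iffP and3P) => [[h1 h2 /forallP h3]|[h1 h2 h3]]; split => //.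
  by move=> e eK ce; have := h3 e; rewrite eK ce eqxx => /implyP; apply.
by apply/forallP => e; apply/implyP => /andP[eK /eqP ce]; exact: h3.
Qed.

Lemma maxcliqueP S K : reflect (clique n S K /\
   forall K', clique n S K' -> K \subset K' -> K' = K) (maxclique n S K).
Proof.
apply: (iffP andP) => [[cK /forallP h]|[cK h]]; split => //.
  move=> K' cK' KK'; have := h K'; rewrite cK' /= properE KK' /= negbK => sub.
  by apply/eqP; rewrite eqEsubset sub.
apply/forallP => K'; apply/implyP => cK'; apply/negP => /properP[KK' [x xK' xK]].
by move: xK; rewrite -(h K' cK' KK') xK'.
Qed.

Lemma clique_sub S K Q : clique n S K -> Q \subset K -> (n <= #|Q|)%N -> clique n S Q.
Proof.
move=> /cliqueP[h1 h2 h3] QK nQ; apply/cliqueP; split => //.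
  exact: subset_trans QK h1.
by move=> e eQ; apply: h3; apply: subset_trans eQ QK.
Qed.

Lemma clique_rel S K e : clique n S K -> e \subset K -> #|e| = n -> e \in rel S.
Proof. by move=> /cliqueP[_ _ h]; apply: h. Qed.

Lemma rel_clique S e : wf n S -> e \in rel S -> clique n S e.
Proof.
move=> /forallP /(_ e) /implyP h eS; have /andP[/eqP ce eC] := h eS.
apply/cliqueP; split; rewrite ?ce //.
move=> e' e'e ce'; suff -> : e' = e by [].
by apply/eqP; rewrite eqEcard e'e ce ce' leqnn.
Qed.

Lemma clique_ext S K : clique n S K -> exists2 M, maxclique n S M & K \subset M.
Proof.
move=> cK.
have PK : clique n S K && (K \subset K) by rewrite cK subxx.
case: (@arg_maxnP _ K (fun M => clique n S M && (K \subset M)) (fun M => #|M|) PK) => M /andP[cM KM] Hmax.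
exists M => //; apply/maxcliqueP; split => // K' cK' MK'.
apply/eqP; rewrite eq_sym eqEcard MK' /=.
by apply: Hmax; rewrite cK' (subset_trans KM MK').
Qed.

Lemma mcliquesE S M : (M \in mcliques n S) = maxclique n S M.
Proof. by rewrite inE. Qed.

Lemma mclique_max S M : M \in mcliques n S -> maxclique n S M.
Proof. by rewrite inE. Qed.

Lemma mclique_clique S M : M \in mcliques n S -> clique n S M.
Proof. by rewrite inE => /andP[]. Qed.

Lemma mclique_sub S M : M \in mcliques n S -> M \subset carrier S.
Proof. by move=> /mclique_clique /cliqueP[]. Qed.

Lemma mclique_card S M : M \in mcliques n S -> (n <= #|M|)%N.
Proof. by move=> /mclique_clique /cliqueP[]. Qed.

Definition P0 S := forall M1 M2, M1 \in mcliques n S -> M2 \in mcliques n S ->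
  (n <= #|M1 :&: M2|)%N -> M1 = M2.

Lemma clique_induced S X Q : X \subset carrier S ->
  clique n (induced S X) Q = (Q \subset X) && clique n S Q.
Proof.
move=> XS; apply/cliqueP/andP => [[h1 h2 h3]|[h1 /cliqueP[_ h2 h3]]]; split => //.
  apply/cliqueP; split => //; first exact: subset_trans h1 XS.
  by move=> e eQ ce; have := h3 e eQ ce; rewrite inE => /andP[].
by move=> e eQ ce; rewrite inE h3 //= (subset_trans eQ h1).
Qed.

Lemma mcliques_induced S X : P0 S -> X \subset carrier S ->
  mcliques n (induced S X) =
  [set M :&: X | M in [set M in mcliques n S | (n <= #|M :&: X|)%N]].
Proof.
move=> p0 XS; apply/setP => Q; rewrite inE; apply/idP/imsetP.
  move=> /maxcliqueP[]; rewrite clique_induced // => /andP[QX cQ] hmax.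
  have [M mM QM] := clique_ext cQ.
  have QMX : Q \subset M :&: X by rewrite subsetI QM QX.
  have nQ : (n <= #|Q|)%N by case/cliqueP: cQ.
  exists M; first by rewrite !inE mM /= (leq_trans nQ (subset_leq_card QMX)).
  apply/esym; apply: hmax => //; rewrite clique_induced // subsetIr /=.
  by apply: clique_sub (maxcliqueP _ _ mM).1 (subsetIl _ _) (leq_trans nQ (subset_leq_card QMX)).
move=> [M]; rewrite !inE => /andP[mM nMX] ->.
have cMX : clique n S (M :&: X).
  exact: clique_sub (maxcliqueP _ _ mM).1 (subsetIl _ _) nMX.
apply/maxcliqueP; split; first by rewrite clique_induced // subsetIr.
move=> Q1; rewrite clique_induced // => /andP[QX cQ] MXQ.
have [M' mM' QM'] := clique_ext cQ.
have eM : M' = M.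
  apply: p0; rewrite ?inE //; apply: leq_trans nMX _; apply: subset_leq_card.
  by rewrite subsetI (subset_trans MXQ QM') subsetIl.
apply/eqP; rewrite eqEsubset MXQ andbT subsetI QX andbT.
by rewrite -eM.
Qed.

Lemma F0 S X : P0 S -> X \subset carrier S ->
  delta n (induced S X) = #|X|%:Z - (\sum_(M in mcliques n S) sc (M :&: X))%N%:Z.
Proof.
move=> p0 XS; rewrite deltaE mcliques_induced // big_imset /=; last first.
  move=> M1 M2; rewrite !inE => /andP[m1 n1] /andP[m2 n2] e12.
  apply: p0; rewrite ?inE ?m1 ?m2 //; apply: leq_trans n1 _; apply: subset_leq_card.
  by rewrite subsetI subsetIl /= e12 subsetIl.
congr (_ - (_)%:Z).
apply/esym; rewrite (bigID (fun M => n <= #|M :&: X|)%N) /= [X in (_ + X)%N]big1 ?addn0.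
  by apply: eq_bigl => M; rewrite !inE.
by move=> M /andP[_]; rewrite -ltnNge => /sc_small.
Qed.

Lemma delta_le_card S X : delta n (induced S X) <= #|X|%:Z.
Proof. rewrite deltaE /=; lia. Qed.

Lemma delta_small S X : (#|X| < n)%N -> delta n (induced S X) = #|X|%:Z.
Proof.
move=> hX; rewrite deltaE /= big1 ?subr0 // => Q; rewrite inE => /andP[/and3P[QX nQ _] _].
by move: (subset_leq_card QX) => /=; lia.
Qed.

Lemma clique_delta S Q : clique n S Q -> delta n (induced S Q) <= (n.-1)%:Z.
Proof.
move=> cQ; have [QS nQ _] := cliqueP _ _ cQ.
have mQ : Q \in mcliques n (induced S Q).
  rewrite inE; apply/maxcliqueP; split; first by rewrite clique_induced // subxx.
  move=> K'; rewrite clique_induced // => /andP[K'Q _] QK'.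
  by apply/eqP; rewrite eqEsubset K'Q QK'.
rewrite deltaE /= (bigD1 Q) //= /sc; lia.
Qed.

Lemma SM S X Y : P0 S -> X \subset carrier S -> Y \subset carrier S ->
  delta n (induced S (X :|: Y)) + delta n (induced S (X :&: Y)) <=
  delta n (induced S X) + delta n (induced S Y).
Proof.
move=> p0 XS YS.
have XYS : X :|: Y \subset carrier S by rewrite subUset XS YS.
have IS : X :&: Y \subset carrier S by rewrite (subset_trans (subsetIl _ _)).
rewrite !F0 //.
have h : (\sum_(M in mcliques n S) sc (M :&: X) + \sum_(M in mcliques n S) sc (M :&: Y) <=
   \sum_(M in mcliques n S) sc (M :&: (X :|: Y)) + \sum_(M in mcliques n S) sc (M :&: (X :&: Y)))%N.
  rewrite -!big_split /=; apply: leq_sum => M _.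
  have e1 := cardsUI (M :&: X) (M :&: Y).
  rewrite -setIUr -setIIr in e1.
  have i1 : (#|M :&: (X :&: Y)| <= #|M :&: X|)%N.
    by apply: subset_leq_card; rewrite setIS // subsetIl.
  have i2 : (#|M :&: (X :&: Y)| <= #|M :&: Y|)%N.
    by apply: subset_leq_card; rewrite setIS // subsetIr.
  rewrite /sc; lia.
have := cardsUI X Y; lia.
Qed.

Lemma dim_le_delta S X Y : Y \subset carrier S -> X \subset Y ->
  dim n S X <= delta n (induced S Y).
Proof. by move=> YS XY; rewrite /dim; apply: bigmin_le_cond; rewrite powersetE YS. Qed.

Lemma dim_le_self S X : dim n S X <= delta n (induced S X).
Proof. exact: bigmin_le_id. Qed.

Lemma dim_ge S X c : c <= delta n (induced S X) ->
  (forall Y, Y \subset carrier S -> X \subset Y -> c <= delta n (induced S Y)) ->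
  c <= dim n S X.
Proof.
move=> h0 h; rewrite /dim; apply: le_bigmin => // Y /andP[]; rewrite powersetE; exact: h.
Qed.

Lemma dim_wit S X : X \subset carrier S -> exists Y,
  [/\ X \subset Y, Y \subset carrier S & dim n S X = delta n (induced S Y)].
Proof.
move=> XS; rewrite /dim.
elim/big_rec: _ => [|Y v /andP[]]; first by exists X.
rewrite powersetE => YS XY [Z [h1 h2 ->]].
case: (leP (delta n (induced S Y)) (delta n (induced S Z))) => _.
  by exists Y. by exists Z.
Qed.

Lemma dim_mono S X Y : X \subset Y -> Y \subset carrier S -> dim n S X <= dim n S Y.
Proof.
move=> XY YS; apply: dim_ge; first by apply: dim_le_delta.
move=> Z ZS YZ; apply: dim_le_delta => //; exact: subset_trans XY YZ.
Qed.

Lemma sum_one S K Y : P0 S -> K \in mcliques n S -> Y \subset K ->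
  (\sum_(M in mcliques n S) sc (M :&: Y))%N = sc Y.
Proof.
move=> p0 mK YK; rewrite (bigD1 K) //= big1 ?addn0; first by rewrite (setIidPr YK).
move=> M /andP[mM MK]; apply: sc_small; rewrite ltnNge; apply/negP => h.
move/eqP: MK; apply; apply: p0 => //; apply: leq_trans h _; apply: subset_leq_card.
by rewrite setIS.
Qed.

Lemma n1_unique S M1 M2 : n = 1%N -> M1 \in mcliques n S -> M2 \in mcliques n S -> M1 = M2.
Proof.
move=> n1 m1 m2.
have c12 : clique n S (M1 :|: M2).
  have [s1 c1 _] := cliqueP _ _ (mclique_clique m1).
  have [s2 c2 _] := cliqueP _ _ (mclique_clique m2).
  apply/cliqueP; split; first by rewrite subUset s1 s2.
    by apply: leq_trans c1 _; apply: subset_leq_card; apply: subsetUl.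
  move=> e eM ce; move: (ce); rewrite n1 => /eqP/cards1P[x ex].
  have : x \in M1 :|: M2 by apply: (subsetP eM); rewrite ex set11.
  rewrite inE => /orP[xm|xm].
    by apply: (clique_rel (mclique_clique m1)) => //; rewrite ex sub1set.
  by apply: (clique_rel (mclique_clique m2)) => //; rewrite ex sub1set.
have [_ h1] := maxcliqueP _ _ (mclique_max m1).
have [_ h2] := maxcliqueP _ _ (mclique_max m2).
by rewrite -(h1 _ c12 (subsetUl _ _)) (h2 _ c12 (subsetUr _ _)).
Qed.

Lemma n1_sum S Y : n = 1%N -> wf n S ->
  (\sum_(M in mcliques n S) sc (M :&: Y))%N = #|[set x | [set x] \in rel S] :&: Y|.
Proof.
move=> n1 wS.
have loopP x : [set x] \in rel S -> exists2 M, M \in mcliques n S & x \in M.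
  move=> xS; have [M mM xM] := clique_ext (rel_clique wS xS).
  by exists M; rewrite ?inE // -sub1set.
case: (set_0Vmem (mcliques n S)) => [e0|[M0 m0]].
  rewrite e0 big_set0; apply/esym/eqP; rewrite cards_eq0; apply/eqP/setP => x.
  rewrite !inE; case xS: ([set x] \in rel S) => //; have [M] := loopP x xS; by rewrite e0 inE.
have -> : mcliques n S = [set M0].
  by apply/setP => M; rewrite in_set1; apply/idP/eqP => [mM|->] //; exact: (n1_unique n1 mM m0).
rewrite big_set1 /sc n1 subn0; congr #|_ :&: _|; apply/setP => x; rewrite inE.
apply/idP/idP => [xM|/loopP[M mM]].
  by apply: (clique_rel (mclique_clique m0)); rewrite ?sub1set ?cards1.
by rewrite (n1_unique n1 mM m0).
Qed.

Lemma wf_rel S e : wf n S -> e \in rel S -> #|e| = n /\ e \subset carrier S.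
Proof. by move=> /forallP /(_ e) /implyP h /h /andP[/eqP]. Qed.

Lemma sum_le1 (I : finType) (P : pred I) (F : I -> nat) j :
  (forall i, P i -> (0 < F i)%N -> i = j) -> (\sum_(i | P i) F i <= F j)%N.
Proof.
move=> H; case Pj: (P j).
  rewrite (bigD1 j) //= big1 ?addn0 // => i /andP[Pi nij].
  apply/eqP; rewrite -leqn0 leqNgt; apply/negP => /(H i Pi) eij.
  by rewrite eij eqxx in nij.
rewrite big1 // => i Pi; apply/eqP; rewrite -leqn0 leqNgt; apply/negP => /(H i Pi) eij.
by rewrite -eij Pi in Pj.
Qed.

Variables (A Bh Ag : structure T).
Hypothesis HA : Cclq n A.
Hypothesis Hpure : pure n A (n%:Z - 1).
Hypothesis HBh : Cgeo n Bh.
Hypothesis HAg : geo_of n A Ag.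
Hypothesis HAgBh : strong n Ag Bh.

Local Notation A0 := (carrier A).
Local Notation Bc := (carrier Bh).

Lemma wfA : wf n A.
Proof. by case/andP: HA => /andP[]. Qed.

Lemma P0A : P0 A.
Proof.
move: HA => /andP[/andP[_ /forallP h] _] M1 M2 m1 m2 nM.
case: (eqVneq M1 M2) => // neq; exfalso.
move: (h M1) => /implyP /(_ m1) /forallP /(_ M2) /implyP /(_ m2) /implyP /(_ neq).
by rewrite ltnNge nM.
Qed.

Lemma wfBh : wf n Bh.
Proof. by case/andP: HBh. Qed.

Lemma geomP X : X \subset Bc -> (n <= #|X|)%N -> delta n (induced Bh X) < n%:Z ->
  [set K in mcliques n Bh | X \subset K] != set0 /\
  forall K1 K2, K1 \in mcliques n Bh -> K2 \in mcliques n Bh -> X \subset K1 -> X \subset K2 -> K1 = K2.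
Proof.
move=> XB nX dX; case/andP: HBh => _ /forallP /(_ X) /implyP.
rewrite XB nX dX => /(_ isT) /cards1P[K0 eK]; split; first by apply/set0Pn; exists K0; rewrite eK set11.
move=> K1 K2 m1 m2 X1 X2.
have : K1 \in [set K in mcliques n Bh | X \subset K] by rewrite inE m1 X1.
have : K2 \in [set K in mcliques n Bh | X \subset K] by rewrite inE m2 X2.
by rewrite eK !inE => /eqP -> /eqP ->.
Qed.

Lemma geomE X : X \subset Bc -> (n <= #|X|)%N -> delta n (induced Bh X) < n%:Z ->
  exists2 K, K \in mcliques n Bh & X \subset K.
Proof.
move=> XB nX dX; have [/set0Pn[K] ] := geomP XB nX dX.
by rewrite inE => /andP[mK XK] _; exists K.
Qed.

Lemma P0Bh : P0 Bh.
Proof.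
move=> M1 M2 m1 m2 nM.
have [e [_ eM ce]] := exists_sub (sub0set (M1 :&: M2)) ltac:(rewrite cards0 /=; exact nM).
have eM1 : e \subset M1 by apply: subset_trans eM (subsetIl _ _).
have eM2 : e \subset M2 by apply: subset_trans eM (subsetIr _ _).
have ce' : (n <= #|e|)%N by rewrite ce.
have ceq : clique n Bh e := clique_sub (mclique_clique m1) eM1 ce'.
have eB : e \subset Bc by apply: subset_trans eM1 (mclique_sub m1).
have := clique_delta ceq => dl.
have [_ U] := geomP eB ce' ltac:(lia).
exact: U.
Qed.

Lemma GBh Y : Y \subset Bc -> (minn #|Y| n.-1)%:Z <= delta n (induced Bh Y).
Proof.
move=> YB; case: (ltnP #|Y| n) => hY.
  rewrite delta_small //; lia.
case: (ltP (delta n (induced Bh Y)) n%:Z) => hd; last by lia.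
have [K mK YK] := geomE YB hY hd.
rewrite F0 //; last exact: P0Bh.
rewrite (sum_one P0Bh mK YK) /sc; lia.
Qed.

Lemma BhU K1 K2 : K1 \in mcliques n Bh -> K2 \in mcliques n Bh ->
  (n.-1 <= #|K1 :&: K2|)%N -> K1 = K2.
Proof.
move=> m1 m2 h; case: (eqVneq K1 K2) => // neq; exfalso.
have UB : K1 :|: K2 \subset Bc by rewrite subUset !mclique_sub.
have n1 := mclique_card m1; have n2 := mclique_card m2.
have hU : (n <= #|K1 :|: K2|)%N.
  by apply: leq_trans n1 _; apply: subset_leq_card; apply: subsetUl.
have e1 := cardsUI K1 K2.
have hs : (sc K1 + sc K2 <= \sum_(M in mcliques n Bh) sc (M :&: (K1 :|: K2)))%N.
  rewrite (bigD1 K1) //= (bigD1 K2) /=; last by rewrite m2 eq_sym neq.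
  rewrite (setIidPl (subsetUl _ _)) (setIidPl (subsetUr _ _)) addnA leq_addr //.
have hd : delta n (induced Bh (K1 :|: K2)) < n%:Z.
  rewrite F0 //; last exact: P0Bh.
  move: hs; rewrite /sc; lia.
have [/set0Pn[K] ] := geomP UB hU hd; rewrite inE => /andP[mK UK] _.
have [_ h1] := maxcliqueP _ _ (mclique_max m1).
have [_ h2] := maxcliqueP _ _ (mclique_max m2).
have cK := mclique_clique mK.
move/eqP: neq; apply.
by rewrite -(h1 _ cK (subset_trans (subsetUl _ _) UK)) (h2 _ cK (subset_trans (subsetUr _ _) UK)).
Qed.

Lemma cAg : carrier Ag = A0.
Proof. by case: HAg. Qed.

Lemma mAg : mcliques n Ag = [set cl n A C | C in
        [set C in powerset A0 | (#|C|%:Z == n%:Z - 1) && (cl n A C != C)]].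
Proof. by case: HAg. Qed.

Lemma A0Bc : A0 \subset Bc.
Proof. by case/andP: HAgBh => /andP[]; rewrite cAg. Qed.

Lemma relAg : rel Ag = [set e in rel Bh | e \subset A0].
Proof. by case/andP: HAgBh => /andP[_ /eqP]; rewrite cAg. Qed.

Lemma deltaAgBh X : A0 \subset X -> X \subset Bc -> delta n Ag <= delta n (induced Bh X).
Proof.
move=> AX XB; case/andP: HAgBh => _ /forallP /(_ X) /implyP.
by rewrite cAg AX XB subr_ge0 => /(_ isT).
Qed.

Lemma pureA_indep X : X \subset A0 -> #|X| = n.-1 -> dim n A X = (n.-1)%:Z.
Proof.
move=> XA cX; case: Hpure => _ [h _].
have := h X XA ltac:(lia); rewrite /indep => /eqP ->; by rewrite cX.
Qed.

Lemma pureA_dep : exists X, [/\ X \subset A0, #|X| = n & dim n A X != n%:Z].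
Proof.
case: Hpure => _ [_ [X [XA cX nX]]]; exists X; split => //; first lia.
move: nX; rewrite /indep; have -> : #|X|%:Z = n%:Z by lia. done.
Qed.

Lemma PA Z : Z \subset A0 -> (minn #|Z| n.-1)%:Z <= delta n (induced A Z).
Proof.
move=> ZA; case: (leqP n.-1 #|Z|) => hZ.
  have [C [_ CZ cC]] := exists_sub (sub0set Z) ltac:(rewrite cards0 /=; exact hZ).
  have := dim_le_delta ZA CZ; rewrite pureA_indep ?(subset_trans CZ ZA) //.
rewrite delta_small; lia.
Qed.

Lemma relA_Bh e : e \in rel A -> e \in rel Bh.
Proof.
move=> eA; have [ce eA0] := wf_rel wfA eA.
have : (0 < #|e|)%N by rewrite ce.
rewrite card_gt0 => /set0Pn[x xe].
set C := e :\ x.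
have CA : C \subset A0 by apply: subset_trans (subD1set _ _) eA0.
have cC : #|C| = n.-1 by rewrite /C; move: ce; rewrite (cardsD1 x e) xe /=; lia.
have dC := pureA_indep CA cC.
have de : dim n A e = (n.-1)%:Z.
  apply/eqP; rewrite eq_le; apply/andP; split.
    exact: le_trans (dim_le_self _ _) (clique_delta (rel_clique wfA eA)).
  by rewrite -dC; apply: dim_mono => //; apply: subD1set.
have xcl a : a \in e -> a \in cl n A C.
  move=> ae; rewrite inE (subsetP eA0 a ae) /=.
  case: (eqVneq a x) => [->|nax].
    by rewrite setUC setD1K // de dC.
  have aC : a \in C by rewrite /C !inE nax.
  by have -> : C :|: [set a] = C by apply/setUidPl; rewrite sub1set.
have ncl : cl n A C != C.
  by apply/eqP => h; have := xcl x xe; rewrite h /C setD11.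
have mcl : cl n A C \in mcliques n Ag.
  rewrite mAg; apply/imsetP; exists C => //.
  rewrite !inE CA ncl andbT cC; apply/eqP; lia.
have : e \in rel Ag.
  apply: (clique_rel (mclique_clique mcl)) => //.
  by apply/subsetP => a; apply: xcl.
by rewrite relAg inE => /andP[].
Qed.

Lemma cliqueA_Bh Q : clique n A Q -> clique n Bh Q.
Proof.
move=> /cliqueP[QA nQ h]; apply/cliqueP; split => //.
  exact: subset_trans QA A0Bc.
by move=> e eQ ce; apply: relA_Bh; apply: h.
Qed.

Lemma partK (D : {set {set T}}) (F : {set T} -> nat) :
  (forall M, M \in D -> (n.-1 <= #|M|)%N /\ exists2 K, K \in mcliques n Bh & M \subset K) ->
  (\sum_(M in D) F M = \sum_(K in mcliques n Bh) \sum_(M in D) (if M \subset K then F M else 0))%N.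
Proof.
move=> H; rewrite exchange_big /=; apply: eq_bigr => M mD.
have [cM [K0 m0 MK0]] := H M mD.
rewrite (bigD1 K0) //= MK0 big1 ?addn0 // => K /andP[mK nK].
case: ifP => // MK; exfalso; move/eqP: nK; apply.
apply: BhU => //; apply: leq_trans cM _; apply: subset_leq_card; by rewrite subsetI MK MK0.
Qed.

Definition CK K := odflt set0
  [pick C : {set T} | (C \subset K :&: A0) && (#|C| == minn n.-1 #|K :&: A0|)].

Lemma CK_spec K : CK K \subset K :&: A0 /\ #|CK K| = minn n.-1 #|K :&: A0|.
Proof.
rewrite /CK; case: pickP => [C /andP[h1 /eqP h2]|h] //=.
have [E [_ h1 h2]] := @exists_sub (minn n.-1 #|K :&: A0|) set0 (K :&: A0) (sub0set _)
   ltac:(rewrite cards0 /= geq_minr //).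
by move: (h E); rewrite h1 h2 eqxx.
Qed.

Definition Kp K := (K :\: A0) :|: CK K.

Lemma Kp_sub K : Kp K \subset K.
Proof.
rewrite /Kp subUset subsetDl /=; have [h _] := CK_spec K.
exact: subset_trans h (subsetIl _ _).
Qed.

Lemma KpA K : Kp K :&: A0 = CK K.
Proof.
have [h _] := CK_spec K; apply/setP => x; rewrite /Kp !inE.
case xC: (x \in CK K).
  by have := subsetP h x xC; rewrite !inE => /andP[_ ->]; rewrite orbT.
by rewrite orbF; case: (x \in A0); rewrite ?andbF.
Qed.

Lemma card_KpA K : (#|Kp K :&: A0| <= n.-1)%N.
Proof. by rewrite KpA; have [_ ->] := CK_spec K; apply: geq_minl. Qed.

Lemma card_KpY K Y : (#|Kp K :&: Y| <= #|(K :\: A0) :&: Y| + n.-1)%N.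
Proof.
have -> : Kp K :&: Y = ((K :\: A0) :&: Y) :|: (CK K :&: Y) by rewrite /Kp setIUl.
rewrite cardsU; have [_ c] := CK_spec K.
have : (#|CK K :&: Y| <= #|CK K|)%N by apply: subset_leq_card; apply: subsetIl.
rewrite c; lia.
Qed.

Lemma card_Kp K : #|Kp K| = (#|K :\: A0| + minn n.-1 #|K :&: A0|)%N.
Proof.
have [h c] := CK_spec K; rewrite /Kp cardsU -c.
suff -> : (K :\: A0) :&: CK K = set0 by rewrite cards0 subn0.
apply/setP => x; rewrite !inE; apply/negbTE; apply/negP => /andP[/andP[xA _] xC].
by have := subsetP h x xC; rewrite !inE (negbTE xA) andbF.
Qed.

Lemma cardKsplit K Y : #|K :&: Y| = (#|K :&: Y :&: A0| + #|(K :\: A0) :&: Y|)%N.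
Proof.
rewrite -(cardsID A0 (K :&: Y)); congr (_ + _)%N; apply: eq_card => x.
by rewrite !inE; do !case: (_ \in _).
Qed.

Definition relB := rel A :|:
  \bigcup_(K in mcliques n Bh) [set e in powerset (Kp K) | #|e| == n].

Local Notation B := (Struc Bc relB).

Lemma relBP e : reflect (e \in rel A \/
   exists2 K, K \in mcliques n Bh & (e \subset Kp K) && (#|e| == n)) (e \in relB).
Proof.
rewrite /relB in_setU; apply: (iffP orP) => [[h|/bigcupP[K mK]]|[h|[K mK h]]].
- by left.
- by rewrite !inE => h; right; exists K.
- by left.
- by right; apply/bigcupP; exists K => //; rewrite !inE.
Qed.

Lemma relB_A : [set e in relB | e \subset A0] = rel A.
Proof.
apply/setP => e; rewrite inE; apply/andP/idP => [[/relBP[//|[K mK /andP[eK /eqP ce]]] eA]|eA].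
  have : (#|e| <= #|Kp K :&: A0|)%N by apply: subset_leq_card; rewrite subsetI eK eA.
  have := card_KpA K; lia.
by split; [apply/relBP; left | exact: (wf_rel wfA eA).2].
Qed.

Lemma relB_Bh e : e \in relB -> e \in rel Bh.
Proof.
case/relBP => [|[K mK /andP[eK /eqP ce]]]; first exact: relA_Bh.
exact: (clique_rel (mclique_clique mK) (subset_trans eK (Kp_sub K)) ce).
Qed.

Lemma wfB : wf n B.
Proof.
apply/forallP => e; apply/implyP => /relBP [eA|[K mK /andP[eK ce]]] /=.
  by have [-> h] := wf_rel wfA eA; rewrite eqxx (subset_trans h A0Bc).
by rewrite ce (subset_trans eK (subset_trans (Kp_sub K) (mclique_sub mK))).
Qed.

Lemma inducedBA Y : Y \subset A0 -> induced B Y = induced A Y.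
Proof.
move=> YA; rewrite /induced; congr Struc; apply/setP => e.
have := relB_A; move/setP/(_ e); rewrite !inE /=.
case eY: (e \subset Y); rewrite ?andbF ?andbT //.
by rewrite (subset_trans eY YA) andbT.
Qed.

Lemma cliqueB_A Q : clique n A Q -> clique n B Q.
Proof.
move=> /cliqueP[QA nQ h]; apply/cliqueP; split => //=.
  exact: subset_trans QA A0Bc.
by move=> e eQ ce; apply/relBP; left; apply: h.
Qed.

Lemma cliqueB_Kp K : K \in mcliques n Bh -> (n <= #|Kp K|)%N -> clique n B (Kp K).
Proof.
move=> mK nK; apply/cliqueP; split => //=.
  exact: subset_trans (Kp_sub K) (mclique_sub mK).
by move=> e eK ce; apply/relBP; right; exists K; rewrite // eK ce eqxx.
Qed.

Lemma cliqueB_A0 Q : clique n B Q -> Q \subset A0 -> clique n A Q.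
Proof.
move=> /cliqueP[_ nQ h] QA; apply/cliqueP; split => // e eQ ce.
by rewrite -relB_A inE h // (subset_trans eQ QA).
Qed.

Lemma cliqueB_Bh Q : clique n B Q -> clique n Bh Q.
Proof.
move=> /cliqueP[QB nQ h]; apply/cliqueP; split => // e eQ ce.
by apply: relB_Bh; apply: h.
Qed.

Lemma cliqueB_out Q : (1 < n)%N -> clique n B Q -> ~~ (Q \subset A0) ->
  exists2 K, K \in mcliques n Bh & Q \subset Kp K.
Proof.
move=> n2 cB nQA.
have [K mK QK] := clique_ext (cliqueB_Bh cB).
have mK' : K \in mcliques n Bh by rewrite inE.
have [p pQ pA] := subsetPn nQA.
have nQ : (n <= #|Q|)%N by case/cliqueP: cB.
exists K => //; apply/subsetP => x xQ.
have [e [pxe eQ ce]] := @exists_sub n [set p; x] Q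
   ltac:(by rewrite subUset !sub1set pQ xQ)
   ltac:(by rewrite cards2 nQ andbT; case: (p != x) => //; apply: ltnW n2).
have eB : e \in relB := clique_rel cB eQ ce.
have pe : p \in e by apply: (subsetP pxe); apply: set21.
have xe : x \in e by apply: (subsetP pxe); apply: set22.
case/relBP: eB => [eA | [J mJ /andP[eJ _]]].
  by have [_ /subsetP /(_ p pe)] := wf_rel wfA eA; rewrite (negbTE pA).
have eJK : J = K.
  apply: BhU => //; have : (#|e| <= #|J :&: K|)%N.
    by apply: subset_leq_card; rewrite subsetI (subset_trans eJ (Kp_sub J)) (subset_trans eQ QK).
  by rewrite ce => h; apply: leq_trans h; apply: leq_pred.
by rewrite -eJK; apply: (subsetP eJ).
Qed.

Definition IKp := [set Kp K | K in [set K in mcliques n Bh | (n <= #|Kp K|)%N]].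

Lemma KpnotA0 K : (n <= #|Kp K|)%N -> ~~ (Kp K \subset A0).
Proof.
move=> nK; apply/negP => h; have := card_KpA K; rewrite (setIidPl h); lia.
Qed.

Lemma mcliquesB : (1 < n)%N -> mcliques n B = mcliques n A :|: IKp.
Proof.
move=> n2; apply/setP => M; rewrite in_setU; apply/idP/orP.
  move=> mM; have /maxcliqueP[cM hM] := mclique_max mM.
  case: (boolP (M \subset A0)) => MA.
    left; rewrite inE; apply/maxcliqueP; split; first exact: cliqueB_A0.
    by move=> M' cM' MM'; apply: hM => //; apply: cliqueB_A.
  right; have [K mK MK] := cliqueB_out n2 cM MA.
  have nM : (n <= #|M|)%N by case/cliqueP: cM.
  have nK : (n <= #|Kp K|)%N by apply: leq_trans nM (subset_leq_card MK).
  apply/imsetP; exists K; first by rewrite inE mK.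
  by apply/esym; apply: hM => //; apply: cliqueB_Kp.
case=> [mA|/imsetP[K]].
  have /maxcliqueP[cM hM] := mclique_max mA.
  have MA := mclique_sub mA.
  rewrite inE; apply/maxcliqueP; split; first exact: cliqueB_A.
  move=> M' cM' MM'; case: (boolP (M' \subset A0)) => M'A.
    by apply: hM => //; apply: cliqueB_A0.
  have [K mK MK] := cliqueB_out n2 cM' M'A.
  have : (#|M| <= #|Kp K :&: A0|)%N.
    by apply: subset_leq_card; rewrite subsetI MA (subset_trans MM' MK).
  have := card_KpA K; have := mclique_card mA; lia.
rewrite inE => /andP[mK nK] ->.
rewrite inE; apply/maxcliqueP; split; first exact: cliqueB_Kp.
move=> M' cM' KM'.
have M'A : ~~ (M' \subset A0).
  by apply: contra (KpnotA0 nK) => h; apply: subset_trans KM' h.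
have [J mJ MJ] := cliqueB_out n2 cM' M'A.
have eJ : J = K.
  apply: BhU => //; have : (#|Kp K| <= #|J :&: K|)%N.
    apply: subset_leq_card; rewrite subsetI (subset_trans (subset_trans KM' MJ) (Kp_sub J)).
    exact: Kp_sub.
  lia.
by apply/eqP; rewrite eqEsubset KM' andbT -eJ.
Qed.

Lemma P0B : P0 B.
Proof.
move=> M1 M2 m1 m2 nM.
have [n1|n2] : n = 1%N \/ (1 < n)%N by lia.
  exact: n1_unique n1 m1 m2.
move: m1 m2 nM; rewrite mcliquesB // !in_setU.
case/orP => [a1|/imsetP[K1 k1 ->]]; case/orP => [a2|/imsetP[K2 k2 ->]] h.
- exact: P0A.
- exfalso; have : (#|M1 :&: Kp K2| <= #|Kp K2 :&: A0|)%N.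
    by apply: subset_leq_card; rewrite subsetI subsetIr (subset_trans (subsetIl _ _) (mclique_sub a1)).
  have := card_KpA K2; move: h n_gt0; clear; lia.
- exfalso; have : (#|Kp K1 :&: M2| <= #|Kp K1 :&: A0|)%N.
    by apply: subset_leq_card; rewrite subsetI subsetIl (subset_trans (subsetIr _ _) (mclique_sub a2)).
  have := card_KpA K1; move: h n_gt0; clear; lia.
- move: k1 k2; rewrite !inE => /andP[mK1 _] /andP[mK2 _].
  suff -> : K1 = K2 by [].
  apply: BhU; rewrite ?inE //; have : (#|Kp K1 :&: Kp K2| <= #|K1 :&: K2|)%N.
    by apply: subset_leq_card; exact: setISS (Kp_sub _) (Kp_sub _).
  move: h n2; clear; lia.
Qed.

Lemma IKp_disj : [disjoint mcliques n A & IKp].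
Proof.
rewrite -setI_eq0; apply/eqP/setP => M; rewrite in_setI in_set0.
apply: negbTE; apply/negP => /andP[mA /imsetP[K]]; rewrite inE => /andP[_ nK] eM.
by have := KpnotA0 nK; rewrite -eM (mclique_sub mA).
Qed.

Lemma SumB Y : Y \subset Bc ->
  (\sum_(M in mcliques n B) sc (M :&: Y) =
   \sum_(M in mcliques n A) sc (M :&: Y) + \sum_(K in mcliques n Bh) sc (Kp K :&: Y))%N.
Proof.
move=> YB; have [n1|n2] : n = 1%N \/ (1 < n)%N by lia.
  rewrite (n1_sum _ n1 wfB) (n1_sum _ n1 wfA) /=.
  case: (set_0Vmem (mcliques n Bh)) => [e0|[K0 m0]].
    have hrel : relB = rel A by rewrite /relB e0 big_set0 setU0.
    by rewrite hrel e0 big_set0 addn0.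
  have eK : mcliques n Bh = [set K0].
    by apply/setP => K; rewrite in_set1; apply/idP/eqP => [mK|->] //; exact: (n1_unique n1 mK m0).
  have hrel : relB = rel A :|: [set e in powerset (Kp K0) | #|e| == n].
    by rewrite /relB eK big_set1.
  rewrite hrel eK big_set1.
  have CK0 : CK K0 = set0.
    by have [_ c] := CK_spec K0; apply: cards0_eq; rewrite c n1 /= min0n.
  have -> : [set x | [set x] \in rel A :|: [set e in powerset (Kp K0) | #|e| == n]] =
            [set x | [set x] \in rel A] :|: Kp K0.
    apply/setP => x; rewrite in_setU [x \in [set x | _]]inE [x \in [set x | _]]inE in_setU.
    by rewrite inE powersetE sub1set cards1 n1 eqxx andbT.
  rewrite setIUl cardsU.
  have -> : [set x | [set x] \in rel A] :&: Y :&: (Kp K0 :&: Y) = set0.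
    apply/setP => x; rewrite !in_setI in_set0 [x \in [set x | _]]inE.
    apply: negbTE; apply/negP => /andP[/andP[xA _] /andP[xK _]].
    have [_ /subsetP /(_ x)] := wf_rel wfA xA; rewrite set11 => /(_ isT) xA0.
    have : x \in Kp K0 :&: A0 by rewrite in_setI xK xA0.
    by rewrite KpA CK0 in_set0.
  by rewrite cards0 subn0 /sc n1 subn0.
rewrite mcliquesB //.
rewrite (@eq_bigl _ _ _ _ _ _ [predU mcliques n A & IKp]); last first.
  by move=> M; rewrite in_setU.
rewrite bigU /=; last exact: IKp_disj.
congr (_ + _)%N.
rewrite /IKp big_imset /=; last first.
  move=> K1 K2; rewrite !inE => /andP[m1 nK1] /andP[m2 nK2] e.
  apply: BhU; rewrite ?inE //; have : (#|Kp K1| <= #|K1 :&: K2|)%N.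
    by apply: subset_leq_card; rewrite subsetI Kp_sub /= e Kp_sub.
  move: nK1; clear; lia.
apply/esym; rewrite (bigID (fun K => n <= #|Kp K|)%N) /= [X in (_ + X)%N]big1 ?addn0.
  by apply: eq_bigl => K; rewrite !inE.
move=> K /andP[_]; rewrite -ltnNge => h; apply: sc_small.
by apply: leq_ltn_trans h; apply: subset_leq_card; apply: subsetIl.
Qed.

Lemma deltaBE Y : Y \subset Bc -> delta n (induced B Y) = #|Y|%:Z -
  (\sum_(M in mcliques n A) sc (M :&: Y))%N%:Z - (\sum_(K in mcliques n Bh) sc (Kp K :&: Y))%N%:Z.
Proof.
move=> YB; rewrite (F0 (S := B) P0B) //= SumB // PoszD opprD addrA. reflexivity.
Qed.

Lemma KI Y : Y \subset Bc -> delta n (induced Bh Y) <= delta n (induced B Y).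
Proof.
move=> YB; rewrite deltaBE // F0 //; last exact: P0Bh.
suff h : (\sum_(M in mcliques n A) sc (M :&: Y) + \sum_(K in mcliques n Bh) sc (Kp K :&: Y)
   <= \sum_(K in mcliques n Bh) sc (K :&: Y))%N by move: h; lia.
rewrite (@partK (mcliques n A) (fun M => sc (M :&: Y))); last first.
  move=> M mM; split; first by have := mclique_card mM; lia.
  have [K mK MK] := clique_ext (cliqueA_Bh (mclique_clique mM)).
  by exists K; rewrite ?inE.
rewrite -big_split /=; apply: leq_sum => K mK.
have ZA : K :&: Y :&: A0 \subset A0 by apply: subsetIr.
case: (ltnP #|K :&: Y :&: A0| n) => hZ.
  rewrite big1 ?add0n; first by apply: sc_mono; apply: setSI; apply: Kp_sub.
  move=> M mM; case: ifP => // MK; apply: sc_small; apply: leq_ltn_trans hZ.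
  apply: subset_leq_card; apply/subsetP => x; rewrite !in_setI => /andP[xM ->].
  by rewrite (subsetP MK x xM) (subsetP (mclique_sub mM) x xM).
have h1 : (\sum_(M in mcliques n A) (if M \subset K then sc (M :&: Y) else 0)
    <= \sum_(M in mcliques n A) sc (M :&: (K :&: Y :&: A0)))%N.
  apply: leq_sum => M mM; case: ifP => // MK.
  suff -> : M :&: Y = M :&: (K :&: Y :&: A0) by [].
  apply/setP => x; rewrite !in_setI; case xM: (x \in M) => //=.
  by rewrite (subsetP MK x xM) (subsetP (mclique_sub mM) x xM) andbT.
have h2 := F0 P0A (subset_trans ZA (subxx _)).
have h3 := PA ZA.
have h4 := card_KpY K Y; have h5 := cardKsplit K Y.
move: h1 h2 h3 h4 h5 hZ n_gt0; rewrite /sc.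
move: (\sum_(M in mcliques n A) (if M \subset K then _ else 0))%N => s1.
move: (\sum_(M in mcliques n A) (#|M :&: (K :&: Y :&: A0)| - n.-1))%N => s2.
move: (delta n (induced A (K :&: Y :&: A0))) => d.
clear; lia.
Qed.

Lemma cliqueAg_Bh L : clique n Ag L -> clique n Bh L.
Proof.
move=> /cliqueP[LA nL h]; rewrite cAg in LA; apply/cliqueP; split => //.
  exact: subset_trans LA A0Bc.
by move=> e eL ce; have := h e eL ce; rewrite relAg inE => /andP[].
Qed.

Lemma KA0_clique K : K \in mcliques n Bh -> (n <= #|K :&: A0|)%N -> clique n Ag (K :&: A0).
Proof.
move=> mK h; apply/cliqueP; split => //; first by rewrite cAg subsetIr.
move=> e eK ce; rewrite relAg inE (subset_trans eK (subsetIr _ _)) andbT.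
exact: (clique_rel (mclique_clique mK) (subset_trans eK (subsetIl _ _)) ce).
Qed.

Lemma deltaA_le X : A0 \subset X -> X \subset Bc -> delta n A <= delta n (induced B X).
Proof.
move=> AX XB; rewrite deltaBE // deltaE.
have hAg := deltaAgBh AX XB; rewrite deltaE cAg F0 // in hAg; last exact: P0Bh.
have eA : (\sum_(M in mcliques n A) sc (M :&: X) = \sum_(K in mcliques n A) sc K)%N.
  by apply: eq_bigr => M mM; rewrite (setIidPl (subset_trans (mclique_sub mM) AX)).
suff h : (\sum_(K in mcliques n Bh) sc (Kp K :&: X) + \sum_(L in mcliques n Ag) sc L
   <= \sum_(K in mcliques n Bh) sc (K :&: X))%N.
  rewrite eA; move: h hAg.
  move: (\sum_(K in mcliques n Bh) sc (Kp K :&: X))%N => s1.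
  move: (\sum_(L in mcliques n Ag) sc L)%N => s2.
  move: (\sum_(K in mcliques n Bh) sc (K :&: X))%N => s3.
  move: (\sum_(K in mcliques n A) sc K)%N => s4.
  clear; lia.
rewrite (@partK (mcliques n Ag) sc); last first.
  move=> L mL; split; first by have := mclique_card mL; lia.
  have [K mK LK] := clique_ext (cliqueAg_Bh (mclique_clique mL)).
  by exists K; rewrite ?inE.
rewrite addnC -big_split /=; apply: leq_sum => K mK.
case: (ltnP #|K :&: A0| n) => h.
  rewrite big1 ?add0n; first by apply: sc_mono; apply: setSI; apply: Kp_sub.
  move=> L mL; case: ifP => // LK; apply: sc_small; apply: leq_ltn_trans h.
  apply: subset_leq_card; rewrite subsetI LK -cAg; exact: mclique_sub mL.
have h1 : (\sum_(L in mcliques n Ag) (if L \subset K then sc L else 0) <=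
   (if K :&: A0 \subset K then sc (K :&: A0) else 0))%N.
  apply: sum_le1 => L mL; case: ifP => // LK _.
  have /maxcliqueP[_ hL] := mclique_max mL.
  apply/esym; apply: hL; first exact: KA0_clique.
  by rewrite subsetI LK -cAg (mclique_sub mL).
rewrite subsetIl in h1.
have h4 := card_KpY K X; have h5 := cardKsplit K X.
have e5 : K :&: X :&: A0 = K :&: A0.
  apply/setP => x; rewrite !in_setI; case xA: (x \in A0); rewrite ?andbF ?andbT //.
  by rewrite (subsetP AX x xA) andbT.
rewrite e5 in h5.
move: h1 h4 h5 h n_gt0; rewrite /sc.
move: (\sum_(L in mcliques n Ag) (if L \subset K then _ else 0))%N => s1.
clear; lia.
Qed.

Lemma P1 b X : [set b] \subset X -> X \subset Bc ->
  delta n (induced B [set b]) <= delta n (induced B X).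
Proof.
move=> bX XB; have bB : [set b] \subset Bc := subset_trans bX XB.
have [n1|n2] : n = 1%N \/ (1 < n)%N by lia.
  rewrite !(F0 (S := B) P0B) //= !(n1_sum _ n1 wfB) /=.
  set LB := [set x | [set x] \in relB].
  have e1 := cardsUI (LB :&: X) [set b].
  have i1 : (#|LB :&: X :|: [set b]| <= #|X|)%N.
    by apply: subset_leq_card; rewrite subUset subsetIr bX.
  have i2 : (#|LB :&: X :&: [set b]| <= #|LB :&: [set b]|)%N.
    by apply: subset_leq_card; apply: setSI; apply: subsetIl.
  move: e1 i1 i2; rewrite cards1.
  move: #|LB :&: X :|: [set b]| #|LB :&: X :&: [set b]| #|LB :&: [set b]| #|LB :&: X| => a1 a2 a3 a4.
  clear; lia.
rewrite delta_small ?cards1 //.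
have := KI XB; have := GBh XB.
have : (1 <= #|X|)%N by apply: leq_trans (subset_leq_card bX); rewrite cards1.
move: n2; clear; lia.
Qed.

Lemma UW C : C \subset A0 -> #|C| = n.-1 -> exists W,
  [/\ W \subset A0, cl n A C \subset W & delta n (induced A W) <= (n.-1)%:Z].
Proof.
move=> CA cC.
suff h : forall k (S : {set T}), #|S| = k -> S \subset cl n A C -> exists W,
   [/\ W \subset A0, C \subset W, S \subset W & delta n (induced A W) <= (n.-1)%:Z].
  by have [W [h1 _ h3 h4]] := h _ (cl n A C) erefl (subxx _); exists W.
have dC := pureA_indep CA cC.
elim=> [|k IH] S cS Scl.
  exists C; split => //; first by rewrite (cards0_eq cS) sub0set.
  by rewrite delta_small cC // ltn_predL.
have : (0 < #|S|)%N by rewrite cS.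
rewrite card_gt0 => /set0Pn[a aS].
have [W [WA CW SW dW]] : exists W,
   [/\ W \subset A0, C \subset W, S :\ a \subset W & delta n (induced A W) <= (n.-1)%:Z].
  apply: IH; first by move: cS; rewrite (cardsD1 a S) aS /= => -[].
  exact: subset_trans (subD1set S a) Scl.
have := subsetP Scl a aS; rewrite inE => /andP[aA /eqP da].
have CaA : C :|: [set a] \subset A0 by rewrite subUset CA sub1set.
have [Y [CaY YA dY]] := dim_wit CaA.
rewrite da dC in dY.
exists (W :|: Y); split.
- by rewrite subUset WA YA.
- exact: subset_trans CW (subsetUl _ _).
- rewrite -(setD1K aS) subUset sub1set inE (subsetP CaY) ?inE ?eqxx ?orbT //=.
  exact: subset_trans SW (subsetUl _ _).
have hSM := SM P0A WA YA.
have hI : (n.-1 <= #|W :&: Y|)%N.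
  rewrite -cC; apply: subset_leq_card; rewrite subsetI CW.
  exact: subset_trans (subsetUl _ _) CaY.
have hP := PA (subset_trans (subsetIl W Y) WA).
move: hSM hI hP dW dY.
move: (delta n (induced A (W :|: Y))) (delta n (induced A (W :&: Y)))
      (delta n (induced A W)) (delta n (induced A Y)) => d1 d2 d3 d4.
clear; lia.
Qed.

Lemma WA K : K \in mcliques n Bh -> exists W, [/\ W \subset A0, K :&: A0 \subset W &
  delta n (induced A W) + (#|K :\: A0|)%:Z <= (n.-1 + sc (Kp K))%N%:Z].
Proof.
move=> mK; have cK := mclique_card mK; have eK := cardsID A0 K.
case: (ltnP #|K :&: A0| n) => h.
  exists (K :&: A0); split => //; first exact: subsetIr.
  rewrite delta_small // /sc card_Kp.
  move: cK eK h n_gt0; clear; lia.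
have cK0 := KA0_clique mK h.
have [L mL KL] := clique_ext cK0.
have : L \in mcliques n Ag by rewrite inE.
rewrite mAg => /imsetP[C]; rewrite !inE => /andP[CA /andP[cC _]] eL.
have cC' : #|C| = n.-1 by move/eqP: cC; lia.
have [W [WA clW dW]] := UW CA cC'.
exists W; split => //; first by rewrite (subset_trans KL) // eL.
rewrite /sc card_Kp.
move: dW h n_gt0; clear; lia.
Qed.

Lemma D2le K X : K \in mcliques n Bh -> X \subset K -> dim n B X <= (n.-1)%:Z.
Proof.
move=> mK XK; have [W [WA KW dW]] := WA mK.
have KB := mclique_sub mK.
have YB : K :|: W \subset Bc by rewrite subUset KB (subset_trans WA A0Bc).
apply: le_trans (dim_le_delta (S := B) YB (subset_trans XK (subsetUl _ _))) _.
rewrite deltaBE //.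
have c1 : (#|K :|: W| <= #|W| + #|K :\: A0|)%N.
  apply: leq_trans (_ : #|W :|: (K :\: A0)| <= _)%N; last first.
    by rewrite cardsU leq_subr.
  apply: subset_leq_card; apply/subsetP => x; rewrite !in_setU in_setD.
  case/orP => [xK|->]; last by rewrite orTb.
  case xA: (x \in A0); last by rewrite xK orbT.
  by rewrite (subsetP KW) // in_setI xK xA.
have c2 : (\sum_(M in mcliques n A) sc (M :&: W) <= \sum_(M in mcliques n A) sc (M :&: (K :|: W)))%N.
  by apply: leq_sum => M _; apply: sc_mono; apply: setIS; apply: subsetUr.
have c3 := F0 P0A WA.
have c4 : (sc (Kp K) <= \sum_(J in mcliques n Bh) sc (Kp J :&: (K :|: W)))%N.
  rewrite (bigD1 K) //= (setIidPl (subset_trans (Kp_sub K) (subsetUl _ _))).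
  exact: leq_addr.
move: c1 c2 c3 c4 dW.
move: (\sum_(M in mcliques n A) sc (M :&: W))%N => s1.
move: (\sum_(M in mcliques n A) sc (M :&: (K :|: W)))%N => s2.
move: (\sum_(J in mcliques n Bh) sc (Kp J :&: (K :|: W)))%N => s3.
move: (delta n (induced A W)) (sc (Kp K)) => d s4.
clear; lia.
Qed.

Lemma DimLB X : X \subset Bc -> (n.-1 <= #|X|)%N -> (n.-1)%:Z <= dim n B X.
Proof.
move=> XB hX; apply: dim_ge.
  have := KI XB; have := GBh XB; move: hX; clear; lia.
move=> Y YB XY; have := KI YB; have := GBh YB.
have : (#|X| <= #|Y|)%N by apply: subset_leq_card.
move: hX; clear; lia.
Qed.

Lemma D2ge X : X \subset Bc -> (n <= #|X|)%N -> dim n B X <= (n.-1)%:Z ->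
  exists2 K, K \in mcliques n Bh & X \subset K.
Proof.
move=> XB nX dX; have [Y [XY YB dY]] := dim_wit (S := B) XB.
have nY : (n <= #|Y|)%N by apply: leq_trans nX (subset_leq_card XY).
have hd : delta n (induced Bh Y) < n%:Z.
  have := KI YB; rewrite -dY; move: dX n_gt0; clear; lia.
have [K mK YK] := geomE YB nY hd.
by exists K => //; apply: subset_trans XY YK.
Qed.

Lemma indepB X : X \subset Bc -> #|X| = n.-1 -> dim n B X = (n.-1)%:Z.
Proof.
move=> XB cX; apply/eqP; rewrite eq_le; apply/andP; split.
  apply: le_trans (dim_le_self _ _) _; rewrite delta_small cX ?ltn_predL //.
by apply: DimLB => //; rewrite cX.
Qed.

Lemma clK K C : K \in mcliques n Bh -> C \subset K -> #|C| = n.-1 -> cl n B C = K.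
Proof.
move=> mK CK cC; have KB := mclique_sub mK; have CB := subset_trans CK KB.
apply/setP => a; rewrite inE /= (indepB CB cC).
case aC: (a \in C).
  have -> : C :|: [set a] = C by apply/setUidPl; rewrite sub1set.
  by rewrite (indepB CB cC) eqxx andbT (subsetP CB) // (subsetP CK).
have cCa : #|C :|: [set a]| = n by rewrite setUC cardsU1 aC cC /=; move: n_gt0; clear; lia.
case aK: (a \in K).
  rewrite (subsetP KB a aK) /=; apply/eqP; apply/eqP; rewrite eq_le; apply/andP; split.
    by apply: D2le mK _; rewrite subUset CK sub1set.
  by apply: DimLB; rewrite ?subUset ?CB ?sub1set ?(subsetP KB a aK) // cCa leq_pred.
apply: negbTE; apply/negP => /andP[aB /eqP d].
have CaB : C :|: [set a] \subset Bc by rewrite subUset CB sub1set.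
have [K2 mK2 CaK2] := D2ge CaB ltac:(by rewrite cCa) ltac:(by rewrite d).
have eK : K = K2.
  apply: BhU => //; rewrite -cC; apply: subset_leq_card.
  by rewrite subsetI CK (subset_trans (subsetUl _ _) CaK2).
by move: aK; rewrite eK (subsetP CaK2) // !inE eqxx orbT.
Qed.

Lemma main_exists : exists B0 : structure T,
    [/\ Cclq n B0, strong n A B0, pure n B0 (n%:Z - 1) & geo_of n B0 Bh].
Proof.
exists B; split.
- apply/andP; split.
    apply/andP; split; first exact: wfB.
    apply/forallP => K1; apply/implyP => m1; apply/forallP => K2; apply/implyP => m2.
    apply/implyP => neq; rewrite ltnNge; apply/negP => h.
    by rewrite (P0B m1 m2 h) eqxx in neq.
  apply/forallP => b; apply/implyP => bB.
  apply/andP; split; first by apply/andP; split; rewrite /= ?sub1set ?eqxx.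
  apply/forallP => X; apply/implyP => /andP[bX XB]; rewrite subr_ge0.
  exact: P1.
- apply/andP; split.
    by apply/andP; split; [exact: A0Bc | rewrite /= relB_A eqxx].
  apply/forallP => X; apply/implyP => /andP[AX XB]; rewrite subr_ge0.
  exact: deltaA_le.
- split; first by move: n_gt0; clear; lia.
  split.
    move=> X XB cX; rewrite /indep (indepB XB); last by move: cX n_gt0; clear; lia.
    by apply/eqP; rewrite cX; move: n_gt0; clear; lia.
  have [X [XA cX dX]] := pureA_dep.
  have XB : X \subset Bc := subset_trans XA A0Bc.
  exists X; split => //; first by rewrite cX; move: n_gt0; clear; lia.
  rewrite /indep cX.
  have [Y [XY YA dY]] := dim_wit XA.
  have h1 : dim n B X <= delta n (induced B Y).
    by apply: dim_le_delta => //=; apply: subset_trans YA A0Bc.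
  rewrite inducedBA // -dY in h1.
  have h2 := le_trans (dim_le_self A X) (delta_le_card A X).
  rewrite cX in h2.
  apply/negP => /eqP h3; move: h1 h2 h3 dX.
  move: (dim n B X) (dim n A X) => d1 d2.
  move=> h1 h2 h3 /eqP h4; apply: h4; move: h1 h2 h3; clear; lia.
- split => //; first exact: wfBh.
  apply/setP => K; apply/idP/imsetP.
    move=> mK; have nK := mclique_card mK.
    have [C [_ CK cC]] := @exists_sub n.-1 set0 K (sub0set K)
       ltac:(by rewrite cards0 /= (leq_trans (leq_pred n) nK)).
    have eK := clK mK CK cC.
    exists C => //; rewrite !inE (subset_trans CK (mclique_sub mK)) /= eK.
    apply/andP; split; first by apply/eqP; rewrite cC; move: n_gt0; clear; lia.
    apply/eqP => eKC; move: nK; rewrite eKC cC; move: n_gt0; clear; lia.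
  case=> C; rewrite !inE => /andP[CB /andP[cC ncl]] ->.
  have cC' : #|C| = n.-1 by move/eqP: cC; move: n_gt0; clear; lia.
  have Ccl : C \subset cl n B C.
    apply/subsetP => a aC; rewrite inE /= (subsetP CB a aC) /=.
    by have -> : C :|: [set a] = C by apply/setUidPl; rewrite sub1set.
  have : ~~ (cl n B C \subset C).
    by apply: contra ncl => h; rewrite eqEsubset h Ccl.
  case/subsetPn => a acl aC.
  move: (acl); rewrite inE /= => /andP[aB /eqP d].
  rewrite (indepB CB cC') in d.
  have cCa : #|C :|: [set a]| = n.
    by rewrite setUC cardsU1 (negbTE aC) cC' /=; move: n_gt0; clear; lia.
  have CaB : C :|: [set a] \subset Bc by rewrite subUset CB sub1set.
  have [K2 mK2 CaK2] := D2ge CaB ltac:(by rewrite cCa) ltac:(by rewrite d).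
  by rewrite (clK mK2 (subset_trans (subsetUl _ _) CaK2) cC') -mcliquesE.
Qed.
End Gen.

Unset Implicit Arguments.

Theorem mainTheorem4 (n : nat) (T : finType) (A Bh : structure T) :
  Cclq n A ->
  pure n A (n%:Z - 1) ->
  Cgeo n Bh ->
  (exists Ag : structure T, geo_of n A Ag /\ strong n Ag Bh) ->
  exists B : structure T,
    [/\ Cclq n B, strong n A B, pure n B (n%:Z - 1) & geo_of n B Bh].
Proof.
move=> HA Hp HBh [Ag [HAg HAgBh]].
have n_gt0 : (0 < n)%N by case: Hp => h _; lia.
exact: (@main_exists n T n_gt0 A Bh Ag HA Hp HBh HAg HAgBh).
Qed.
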